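(* Let $n,g,k,p\in\mathbb N$. Define the following four sets. (1) $\widetilde a_{g,p}(n)$ is the set of fixed-point-free involutions $\pi$ of $[2n]$ such that $\#(\pi^{-1}1_{2n})=n+1-2g$, $\pi(a)$ is odd for every even $a\in[2n]$, and the restriction of $\pi^{-1}1_{2n}$ to the odd elements $\{1,3,\ldots,2n-1\}$ (which it preserves) has exactly $p$ cycles. Here $1_{2n}=(1,2,\ldots,2n)$. (2) On $\pm[2n]$ let $\tau_0=(1,-1)\cdots(2n,-2n)$, $\tau_2=(-1,2)(-2,3)\cdots(-2n,1)$, $B(n)=\{1,3,\ldots,2n-1\}\cup\{-2,-4,\ldots,-2n\}$ and $W(n)=\{2,4,\ldots,2n\}\cup\{-1,-3,\ldots,1-2n\}$. $\widetilde b_{k,p}(n)$ is the set of fixed-point-free involutions $\tau_1$ of $\pm[2n]$ such that $\#(\tau_2\tau_1)=2n+2-2k$, $\tau_0\tau_1=\tau_1\tau_0$, $\tau_0\tau_1$ is fixed-point free, there exists $a\in[2n]$ with $\tau_1(a)\in[2n]$, $\tau_1(B(n))\subseteq B(n)$, and the restriction of $\tau_2\tau_1$ to $W(n)$ (which it preserves) has exactly $2p$ cycles. (3) $\widehat a_{g,p}(n)$ is the set of permutations $\pi$ of $[n]$ with $\#(\pi)=p$ and $\#(\pi^{-1}1_n)=n-p+1-2g$, where $1_n=(1,\ldots,n)$. (4) On $\pm[n]$ let $\tau_0=(1,-1)\cdots(n,-n)$ and $\widetilde 1_n=(1,\ldots,n)(-n,\ldots,-1)$. $\widehat b_{k,p}(n)$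 is the set of permutations $\tau_1$ of $\pm[n]$ such that $\#(\tau_1)=2p$, $\#(\widetilde 1_n\tau_1)=2(n-p+1-k)$, $\tau_0\tau_1\tau_0=\tau_1^{-1}$, $\tau_0\tau_1$ is fixed-point free, and there exists $a\in[n]$ with $\tau_1(a)\in-[n]$. Then there are bijections $\widetilde a_{g,p}(n)\cong\widehat a_{g,p}(n)$ and $\widetilde b_{k,p}(n)\cong\widehat b_{k,p}(n)$.
   Context: Permutations are composed right to left, $(\sigma\rho)(x)=\sigma(\rho(x))$; $\#(\sigma)$ denotes the number of cycles of $\sigma$ including fixed points; $[m]=\{1,\ldots,m\}$, $-[m]=\{-1,\ldots,-m\}$, $\pm[m]=[m]\cup-[m]$. The sets in (1),(2) encode bipartite ribbon graphs (orientable of genus $g$, resp. non-orientable of Euler genus $k$) with $p$ white boundaries, and those in (3),(4) the corresponding combinatorial hypermaps. *)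

(* Defs.v *)
From mathcomp Require Import all_boot all_order all_fingroup.
Set Implicit Arguments. Unset Strict Implicit. Unset Printing Implicit Defensive.

(* Encoding conventions:
   [m] = {1..m} is represented by 'I_m, the ordinal i standing for i+1.
   Hence a in [m] is odd iff its ordinal i is even.
   +-[m] is represented by  bool * 'I_m : (false, i) stands for  i+1
   and (true, i) stands for -(i+1).
   Composition: paper's (sigma rho)(x) = sigma(rho x) is MathComp's (rho * sigma)
   since (s * t) x = t (s x) in perm.v.  *)

Definition pm (m : nat) : finType := (bool * 'I_m)%type.
Definition pos {m} (i : 'I_m) : pm m := (false, i).
Definition neg {m} (i : 'I_m) : pm m := (true, i).

Definition ncycles (T : finType) (s : {perm T}) : nat := #|porbits s|.
(* number of cycles of the restriction of s to a set S it preserves *)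
Definition ncycles_on (T : finType) (s : {perm T}) (S : {set T}) : nat :=
  #|[set porbit s x | x in S]|.

Definition fpf (T : finType) (s : {perm T}) : bool := [forall x, s x != x].
Definition fpf_invol (T : finType) (s : {perm T}) : bool := (s * s == 1)%g && fpf s.

Definition cyc (m : nat) : {perm 'I_m} := perm (@ordS_inj m).

Definition tau0_fun m (x : pm m) : pm m := (~~ x.1, x.2).
Lemma tau0_inj m : injective (@tau0_fun m).
Proof. by case=> b i [c j] /= [] /negb_inj -> ->. Qed.
Definition tau0 m : {perm pm m} := perm (@tau0_inj m).

(* tau_2 = (-1,2)(-2,3)...(-m,1):  -(i+1) <-> i+2 (mod m) *)
Definition tau2_fun m (x : pm m) : pm m :=
  if x.1 then pos (ordS x.2) else neg (ord_pred x.2).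
Lemma tau2_K m : involutive (@tau2_fun m).
Proof. by case=> [[] i]; rewrite /tau2_fun /= ?ordSK ?ord_predK. Qed.
Definition tau2 m : {perm pm m} := perm (inv_inj (@tau2_K m)).

Definition tcyc_fun m (x : pm m) : pm m :=
  if x.1 then neg (ord_pred x.2) else pos (ordS x.2).
Definition tcyc_inv m (x : pm m) : pm m :=
  if x.1 then neg (ordS x.2) else pos (ord_pred x.2).
Lemma tcyc_inj m : injective (@tcyc_fun m).
Proof.
apply: (can_inj (g := @tcyc_inv m)).
by case=> [[] i]; rewrite /tcyc_fun /tcyc_inv /= ?ordSK ?ord_predK.
Qed.
Definition tcyc m : {perm pm m} := perm (@tcyc_inj m).

(* B(n) = {1,3,..,2n-1} u {-2,..,-2n};  W(n) = {2,..,2n} u {-1,..,1-2n} *)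
Definition Bset n : {set pm (2 * n)} := [set x : pm (2 * n) | odd x.2 == x.1].
Definition Wset n : {set pm (2 * n)} := [set x : pm (2 * n) | odd x.2 != x.1].

Definition a_tilde (g p n : nat) : {set {perm 'I_(2 * n)}} :=
  [set pi | [&& fpf_invol pi,
             ncycles (cyc (2 * n) * pi^-1)%g + 2 * g == n + 1,
             [forall i : 'I_(2 * n), odd i ==> ~~ odd (pi i)] &
             ncycles_on (cyc (2 * n) * pi^-1)%g [set i : 'I_(2 * n) | ~~ odd i] == p]].

Definition b_tilde (k p n : nat) : {set {perm pm (2 * n)}} :=
  [set t1 | [&& fpf_invol t1,
             ncycles (t1 * tau2 (2 * n))%g + 2 * k == 2 * n + 2,
             (tau0 (2 * n) * t1 == t1 * tau0 (2 * n))%g,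
             fpf (t1 * tau0 (2 * n))%g,
             [exists i : 'I_(2 * n), ~~ (t1 (pos i)).1],
             [forall x in Bset n, t1 x \in Bset n] &
             ncycles_on (t1 * tau2 (2 * n))%g (Wset n) == 2 * p]].

Definition a_hat (g p n : nat) : {set {perm 'I_n}} :=
  [set pi | (ncycles pi == p) && (ncycles (cyc n * pi^-1)%g + p + 2 * g == n + 1)].

Definition b_hat (k p n : nat) : {set {perm pm n}} :=
  [set t1 | [&& ncycles t1 == 2 * p,
             ncycles (t1 * tcyc n)%g + 2 * p + 2 * k == 2 * n + 2,
             (tau0 n * t1 * tau0 n == t1^-1)%g,
             fpf (t1 * tau0 n)%g &
             [exists i : 'I_n, (t1 (pos i)).1]]].

(* Main.v *)
Require Import Defs.
From mathcomp Require Import all_boot all_order all_fingroup.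
From mathcomp Require Import zify.
Set Implicit Arguments. Unset Strict Implicit. Unset Printing Implicit Defensive.

Section Gen.
Variable T : finType.

Definition mkperm (f : T -> T) : {perm T} :=
  match injectiveP f with ReflectT H => perm H | ReflectF _ => 1%g end.

Lemma mkpermE f : injective f -> mkperm f =1 f.
Proof. by move=> fi x; rewrite /mkperm; case: injectiveP => // H; rewrite permE. Qed.

Lemma porbit_sub (s : {perm T}) (W : {set T}) x :
  (forall y, y \in W -> s y \in W) -> x \in W -> porbit s x \subset W.
Proof.
move=> sW xW; apply/subsetP=> y /porbitP [i ->]; rewrite permX.
by elim: i => //= i IH; apply: sW.
Qed.

Lemma ncycles_split (s : {perm T}) (W : {set T}) :
  (forall y, y \in W -> s y \in W) ->
  ncycles s = ncycles_on s W + ncycles_on s (~: W).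
Proof.
move=> sW; rewrite /ncycles /ncycles_on /porbits.
have -> : porbit s @: T = porbit s @: (W :|: ~: W).
  by apply/setP=> O; apply/imsetP/imsetP => -[x _ ->]; exists x; rewrite ?setUCr ?inE.
rewrite imsetU cardsU; set I := _ :&: _.
suff -> : I = set0 by rewrite cards0 subn0.
apply/setP=> O; rewrite !inE; apply/negbTE/negP=> /andP[/imsetP[x xW ->] /imsetP[y yW]].
move=> E; have : y \in porbit s x by rewrite E porbit_id.
by move/(subsetP (porbit_sub sW xW)); rewrite inE in yW; rewrite (negbTE yW).
Qed.
End Gen.

Lemma ncycles_transport (T U : finType) (s : {perm T}) (r : {perm U}) (h : U -> T) :
  injective h -> (forall u, s (h u) = h (r u)) ->
  ncycles_on s (h @: setT) = ncycles r.
Proof.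
move=> hi hs; rewrite /ncycles_on /ncycles /porbits.
have E u : porbit s (h u) = h @: porbit r u.
  apply/setP=> y; apply/porbitP/imsetP.
  - case=> i ->; exists ((r ^+ i)%g u); first exact: mem_porbit.
    rewrite !permX; elim: i => //= i ->; exact: hs.
  - case=> z /porbitP [i ->] ->; exists i.
    by rewrite !permX; elim: i => //= i <-; rewrite hs.
have -> : [set porbit s x | x in h @: setT] =
    (fun A : {set U} => h @: A) @: [set porbit r x | x : U].
  apply/setP=> O; apply/imsetP/imsetP.
  - case=> x /imsetP [u _ ->] ->; exists (porbit r u); first exact: imset_f.
    exact: E.
  - case=> A /imsetP [u _ ->] ->; exists (h u); first exact: imset_f.
    by rewrite E.
by rewrite card_imset //; apply: imset_inj.
Qed.

Lemma assemble (T1 T2 : finType) (A : {set T1}) (B : {set T2}) (S : pred T1)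
  (R : T1 -> T2 -> Prop) (f : T1 -> T2) (g : T2 -> T1) :
  (forall x, S x -> R x (f x)) ->
  (forall y, y \in B -> S (g y) /\ R (g y) y) ->
  (forall x x' y, S x -> S x' -> R x y -> R x' y -> x = x') ->
  (forall x y y', R x y -> R x y' -> y = y') ->
  (forall x, x \in A -> S x) ->
  (forall x y, S x -> R x y -> (x \in A) = (y \in B)) ->
  {in A &, injective f} /\ f @: A = B.
Proof.
move=> Rf Rg Ux Uy AS AB; split.
  move=> x x' xA x'A E; apply: (Ux x x' (f x)); try exact: AS.
    exact: Rf (AS _ xA).
  by rewrite E; exact: Rf (AS _ x'A).
apply/setP=> y; apply/imsetP/idP.
  by case=> x xA ->; rewrite -(AB x) //; [exact: AS | exact: Rf (AS _ xA)].
move=> yB; have [Sg Rgy] := Rg y yB; exists (g y); first by rewrite (AB _ y).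
exact: (Uy (g y) _ _ Rgy (Rf _ Sg)).
Qed.

Lemma invol_inv (T : finType) (s : {perm T}) : (s * s == 1)%g ->
  (forall x, s (s x) = x) /\ (forall x, s^-1%g x = s x).
Proof.
move=> /eqP E; have I x : s (s x) = x by rewrite -permM E perm1.
split=> // x; apply: (perm_inj (s := s)); by rewrite permKV I.
Qed.

Section PartA.
Variable n : nat.

Definition ev (i : 'I_n) : 'I_(2 * n) := @Ordinal (2 * n) (2 * i) ltac:(case: i => /= i; lia).
Definition od (i : 'I_n) : 'I_(2 * n) := @Ordinal (2 * n) (2 * i + 1) ltac:(case: i => /= i; lia).
Definition hlf (x : 'I_(2 * n)) : 'I_n := @Ordinal n (x %/ 2) ltac:(case: x => /= x; lia).

Lemma hlf_ev i : hlf (ev i) = i. Proof. apply: val_inj => /=; lia. Qed.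
Lemma hlf_od i : hlf (od i) = i. Proof. apply: val_inj => /=; lia. Qed.
Lemma odd_ev i : odd (ev i) = false. Proof. by rewrite /= oddM. Qed.
Lemma odd_od i : odd (od i) = true. Proof. by rewrite /= addn1 /= oddM. Qed.
Lemma ev_hlf (x : 'I_(2 * n)) : ~~ odd x -> ev (hlf x) = x.
Proof. move=> h; apply: val_inj => /=; move: h; case: x => /= x _; lia. Qed.
Lemma od_hlf (x : 'I_(2 * n)) : odd x -> od (hlf x) = x.
Proof. move=> h; apply: val_inj => /=; move: h; case: x => /= x _; lia. Qed.
Lemma ev_inj : injective ev.
Proof. by move=> i j /(congr1 hlf); rewrite !hlf_ev. Qed.
Lemma od_inj : injective od.
Proof. by move=> i j /(congr1 hlf); rewrite !hlf_od. Qed.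

Lemma cyc_od i : cyc (2 * n) (od i) = ev (cyc n i).
Proof.
rewrite /cyc !permE; apply: val_inj => /=.
case: i => /= i lt; case: (ltngtP i.+1 n) => h; try lia.
  rewrite !modn_small //; lia.
rewrite h modnn; have -> : (2 * i + 1).+1 = 2 * n by lia. by rewrite modnn.
Qed.

Lemma cyc_ev i : cyc (2 * n) (ev i) = od i.
Proof.
rewrite /cyc !permE; apply: val_inj => /=; case: i => /= i lt.
rewrite modn_small; lia.
Qed.

Definition Sa (pi : {perm 'I_(2 * n)}) :=
  fpf_invol pi && [forall i : 'I_(2 * n), odd i ==> ~~ odd (pi i)].
Definition Ra (pi : {perm 'I_(2 * n)}) (r : {perm 'I_n}) := forall i, pi (od i) = ev (r i).
Definition fa (pi : {perm 'I_(2 * n)}) : {perm 'I_n} := mkperm (fun i => hlf (pi (od i))).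
Definition ga (r : {perm 'I_n}) : {perm 'I_(2 * n)} :=
  mkperm (fun x : 'I_(2 * n) => if odd x then ev (r (hlf x)) else od (r^-1%g (hlf x))).

Lemma Sa_par pi (x : 'I_(2 * n)) : Sa pi -> odd x -> ~~ odd (pi x).
Proof. by case/andP=> _ /forallP /(_ x) /implyP. Qed.

Lemma Ra_fa pi : Sa pi -> Ra pi (fa pi).
Proof.
move=> S i; rewrite /fa mkpermE ?ev_hlf ?(Sa_par S) ?odd_od //.
move=> a b /(congr1 ev); rewrite !ev_hlf ?(Sa_par S) ?odd_od //.
by move/perm_inj/od_inj.
Qed.

Lemma ga_spec r : Sa (ga r) /\ Ra (ga r) r.
Proof.
pose G := fun x : 'I_(2 * n) => if odd x then ev (r (hlf x)) else od (r^-1%g (hlf x)).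
have GG x : G (G x) = x.
  rewrite /G; case ox: (odd x).
    by rewrite odd_ev hlf_ev permK od_hlf.
  by rewrite odd_od hlf_od permKV ev_hlf ?ox.
have Gi : injective G by apply: (can_inj GG).
have E x : ga r x = G x by rewrite /ga mkpermE.
split; last by move=> i; rewrite E /G odd_od hlf_od.
apply/andP; split.
  apply/andP; split.
    by apply/eqP/permP=> x; rewrite permM perm1 !E GG.
  apply/forallP=> x; rewrite E /G; case: ifP => ox.
    by rewrite -(inj_eq val_inj) /= ; apply/negP=> /eqP h; move: ox; rewrite -h /= oddM.
  by rewrite -(inj_eq val_inj) /= ; apply/negP=> /eqP h; move: ox; rewrite -h /= addn1 /= oddM.
apply/forallP=> x; apply/implyP=> ox; by rewrite E /G ox odd_ev.
Qed.

Lemma Ra_inv pi r j : Sa pi -> Ra pi r -> pi (ev j) = od (r^-1%g j).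
Proof.
case/andP=> /andP [I _] _ R; have [II _] := invol_inv I.
by rewrite -{1}(permKV r j) -R II.
Qed.

Lemma Ra_uniq1 pi pi' r : Sa pi -> Sa pi' -> Ra pi r -> Ra pi' r -> pi = pi'.
Proof.
move=> S S' R R'; apply/permP=> x; case ox: (odd x).
  by rewrite -(od_hlf ox) R R'.
by rewrite -(ev_hlf (negbT ox)) (Ra_inv _ S R) (Ra_inv _ S' R').
Qed.

Lemma Ra_uniq2 pi r r' : Ra pi r -> Ra pi r' -> r = r'.
Proof. by move=> R R'; apply/permP=> i; apply: ev_inj; rewrite -R -R'. Qed.

Lemma evens_im : [set i : 'I_(2 * n) | ~~ odd i] = ev @: setT.
Proof.
apply/setP=> x; rewrite inE; apply/idP/imsetP.
  by move=> ox; exists (hlf x); rewrite ?ev_hlf.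
by case=> i _ ->; rewrite odd_ev.
Qed.

Lemma odds_im : ~: [set i : 'I_(2 * n) | ~~ odd i] = od @: setT.
Proof.
apply/setP=> x; rewrite !inE negbK; apply/idP/imsetP.
  by move=> ox; exists (hlf x); rewrite ?od_hlf.
by case=> i _ ->; rewrite odd_od.
Qed.

Lemma Ra_equiv g p pi r : Sa pi -> Ra pi r ->
  (pi \in a_tilde g p n) = (r \in a_hat g p n).
Proof.
move=> S R; have S0 := S; case/andP: S0 => /andP [I F] Par.
have [II IV] := invol_inv I.
set s := (cyc (2 * n) * pi^-1)%g.
have sev i : s (ev i) = ev (r i) by rewrite permM cyc_ev IV R.
have sod i : s (od i) = od ((cyc n * r^-1)%g i).
  by rewrite /s !permM cyc_od IV (Ra_inv _ S R).
have E := ncycles_split (W := [set i : 'I_(2 * n) | ~~ odd i]) (s := s).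
rewrite !inE -/s E; last first.
  move=> y; rewrite evens_im => /imsetP [i _ ->]; rewrite sev; exact: imset_f.
rewrite odds_im evens_im !(ncycles_transport ev_inj sev) (ncycles_transport od_inj sod).
have -> : fpf_invol pi by rewrite /fpf_invol I F.
rewrite Par /=.
by case: (ncycles r =P p) => [->|_]; rewrite ?andbF ?andbT //= (addnC p).
Qed.

End PartA.

Lemma partA n g p : exists f : {perm 'I_(2 * n)} -> {perm 'I_n},
      {in a_tilde g p n &, injective f} /\ f @: a_tilde g p n = a_hat g p n.
Proof.
exists (@fa n); apply: (@assemble _ _ _ _ (@Sa n) (@Ra n) _ (@ga n)).
- exact: Ra_fa.
- move=> y _; exact: ga_spec.
- exact: Ra_uniq1.
- exact: Ra_uniq2.
- by move=> x; rewrite inE => /and4P [a _ c _]; rewrite /Sa a c.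
- move=> x y; exact: Ra_equiv.
Qed.

Lemma tau0E m (x : pm m) : tau0 m x = (~~ x.1, x.2).
Proof. by rewrite permE. Qed.
Lemma tau0K m (x : pm m) : tau0 m (tau0 m x) = x.
Proof. by case: x => b i; rewrite !tau0E /= negbK. Qed.
Lemma tau2K m (x : pm m) : tau2 m (tau2 m x) = x.
Proof. by rewrite !permE tau2_K. Qed.
Lemma tau2E m (x : pm m) : tau2 m x = tau2_fun x.
Proof. by rewrite permE. Qed.
Lemma tcycE m (x : pm m) : tcyc m x = tcyc_fun x.
Proof. by rewrite permE. Qed.

Local Arguments ordS : simpl never.
Local Arguments ord_pred : simpl never.
Local Arguments ev : simpl never.
Local Arguments od : simpl never.
Local Arguments hlf : simpl never.
Section PartB.
Variable n : nat.

Lemma ordS_ev (i : 'I_n) : ordS (ev i) = od i.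
Proof. by have := cyc_ev i; rewrite /cyc permE. Qed.
Lemma ordS_od (i : 'I_n) : ordS (od i) = ev (ordS i).
Proof. by have := cyc_od i; rewrite /cyc !permE. Qed.
Lemma ord_pred_od (i : 'I_n) : ord_pred (od i) = ev i.
Proof. by rewrite -ordS_ev ordSK. Qed.
Lemma ord_pred_ev (i : 'I_n) : ord_pred (ev i) = od (ord_pred i).
Proof. by rewrite -{1}(ord_predK i) -ordS_od ordSK. Qed.

Definition psi (y : pm n) : pm (2 * n) := (~~ y.1, if y.1 then od y.2 else ev y.2).
Definition psiinv (x : pm (2 * n)) : pm n := (~~ x.1, hlf x.2).

Lemma psiK y : psiinv (psi y) = y.
Proof. by case: y => [[] i]; rewrite /psiinv /psi /= ?hlf_od ?hlf_ev. Qed.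
Lemma psi_inj : injective psi.
Proof. exact: can_inj psiK. Qed.
Lemma psiW y : psi y \in Wset n.
Proof. by case: y => [[] i]; rewrite inE /psi /= ?odd_od ?odd_ev. Qed.
Lemma psiinvK x : x \in Wset n -> psi (psiinv x) = x.
Proof.
case: x => c j; rewrite inE /psi /psiinv /= negbK.
by case: c; case oj: (odd j) => //= _; rewrite ?ev_hlf ?od_hlf ?oj.
Qed.
Lemma WB : Wset n = ~: Bset n.
Proof. by apply/setP=> x; rewrite !inE. Qed.
Lemma tau0W x : (tau0 (2 * n) x \in Wset n) = (x \notin Wset n).
Proof. by case: x => c j; rewrite tau0E !inE /=; case: c; case: odd. Qed.

Lemma odd_split (j : 'I_(2 * n)) : (j = ev (hlf j) /\ odd j = false) \/ (j = od (hlf j) /\ odd j = true).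
Proof.
case oj: (odd j); [right | left]; split => //; [rewrite od_hlf | rewrite ev_hlf ?oj] => //.
Qed.

Lemma tau2W x : (tau2 (2 * n) x \in Wset n) = (x \in Wset n).
Proof.
case: x => c j; case: (odd_split j) => -[-> oj]; case: c;
  rewrite tau2E /tau2_fun !inE; cbn [fst snd pos neg];
  by rewrite ?ordS_ev ?ordS_od ?ord_pred_ev ?ord_pred_od ?odd_ev ?odd_od.
Qed.

Lemma tau2psi y : tau2 (2 * n) (psi y) = psi (tau0 n y).
Proof.
case: y => [[] i]; rewrite tau2E tau0E /tau2_fun /psi /= /neg /pos.
  by rewrite ord_pred_od.
by rewrite ordS_ev.
Qed.

Lemma key z : tau2 (2 * n) (tau0 (2 * n) (tau2 (2 * n) (psi z))) = tau0 (2 * n) (psi (tcyc n z)).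
Proof.
case: z => [[] i]; rewrite !tau2E !tau0E tcycE /tcyc_fun /tau2_fun /psi /= /neg /pos /=.
  by rewrite ord_pred_od ord_pred_ev.
by rewrite ordS_ev ordS_od.
Qed.

Definition Sb (t1 : {perm pm (2 * n)}) :=
  [&& fpf_invol t1, (tau0 (2 * n) * t1 == t1 * tau0 (2 * n))%g &
      [forall x in Bset n, t1 x \in Bset n]].
Definition Rb (t1 : {perm pm (2 * n)}) (t : {perm pm n}) :=
  forall y, tau2 (2 * n) (t1 (psi y)) = psi (t y).

Lemma inW_B x : (x \in Wset n) = (x \notin Bset n).
Proof. by rewrite WB inE. Qed.

Section S.
Variable t1 : {perm pm (2 * n)}.
Hypothesis S : Sb t1.
Lemma Sb_inv x : t1 (t1 x) = x.
Proof. by case/and3P: S => /andP [/invol_inv [h _] _] _ _. Qed.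
Lemma Sb_comm x : t1 (tau0 (2 * n) x) = tau0 (2 * n) (t1 x).
Proof. by case/and3P: S => _ /eqP /permP /(_ x); rewrite !permM. Qed.
Lemma Sb_fpf x : t1 x != x.
Proof. by case/and3P: S => /andP [_ /forallP] h _ _. Qed.
Lemma Sb_B x : x \in Bset n -> t1 x \in Bset n.
Proof. by case/and3P: S => _ _ /forall_inP; apply. Qed.
Lemma Sb_W x : x \in Wset n -> t1 x \in Wset n.
Proof.
rewrite !inW_B => xB; apply/negP => /Sb_B; rewrite Sb_inv => h.
by rewrite h in xB.
Qed.
End S.

Definition fb (t1 : {perm pm (2 * n)}) : {perm pm n} :=
  mkperm (fun y => psiinv (tau2 (2 * n) (t1 (psi y)))).

Lemma Rb_fb t1 : Sb t1 -> Rb t1 (fb t1).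
Proof.
move=> S y; have WW z : tau2 (2 * n) (t1 (psi z)) \in Wset n by rewrite tau2W Sb_W ?psiW.
rewrite /fb mkpermE ?psiinvK //.
move=> a b /(congr1 psi); rewrite !psiinvK //.
by move/perm_inj/perm_inj/psi_inj.
Qed.

Definition Hf (t : {perm pm n}) (x : pm (2 * n)) := tau2 (2 * n) (psi (t (psiinv x))).
Definition gb (t : {perm pm n}) : {perm pm (2 * n)} :=
  mkperm (fun x => if x \in Wset n then Hf t x else tau0 (2 * n) (Hf t (tau0 (2 * n) x))).

Lemma gb_spec t : (tau0 n * t * tau0 n == t^-1)%g -> fpf (t * tau0 n)%g ->
  Sb (gb t) /\ Rb (gb t) t.
Proof.
move=> /eqP H3 /forallP H4.
have t3 z : tau0 n (t (tau0 n z)) = t^-1%g z by rewrite -H3 !permM.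
have tt u : t (tau0 n (t u)) = tau0 n u.
  by rewrite -[t (tau0 n (t u))]tau0K t3 permK.
have HW x : Hf t x \in Wset n by rewrite /Hf tau2W psiW.
have HH x : x \in Wset n -> Hf t (Hf t x) = x.
  by move=> xW; rewrite /Hf [X in psiinv X]tau2psi psiK tt -tau2psi tau2K psiinvK.
have Hfix x : x \in Wset n -> Hf t x != x.
  move=> xW; apply/negP => /eqP; rewrite /Hf -{2}(psiinvK xW).
  set u := psiinv x => /(congr1 (tau2 (2 * n))); rewrite tau2K tau2psi => /psi_inj E.
  by move: (H4 u); rewrite permM E tau0K eqxx.
pose G x := if x \in Wset n then Hf t x else tau0 (2 * n) (Hf t (tau0 (2 * n) x)).
have GW x : (G x \in Wset n) = (x \in Wset n).
  by rewrite /G; case: ifP => xW; rewrite ?HW ?xW // tau0W HW.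
have GG x : G (G x) = x.
  rewrite /G; case xW: (x \in Wset n); first by rewrite HW HH.
  by rewrite tau0W HW /= tau0K HH ?tau0K // tau0W xW.
have E x : gb t x = G x by rewrite /gb mkpermE //; apply: (can_inj GG).
split; last by move=> y; rewrite E /G psiW /Hf tau2K psiK.
apply/and3P; split.
- apply/andP; split; first by apply/eqP/permP=> x; rewrite permM perm1 !E GG.
  apply/forallP=> x; rewrite E /G; case: ifP => xW; first exact: Hfix.
  apply/negP=> /eqP /(congr1 (tau0 (2 * n))); rewrite tau0K => /eqP.
  by apply/negP; apply: Hfix; rewrite tau0W xW.
- apply/eqP/permP=> x; rewrite !permM !E /G tau0W; case xW: (x \in Wset n) => /=.
    by rewrite tau0K.
  by rewrite tau0K.
- apply/forall_inP=> x; rewrite E -[x \in Bset n]negbK -[G x \in Bset n]negbK -!inW_B GW.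
  by [].
Qed.

Lemma Sb_Wiff t1 x : Sb t1 -> (t1 x \in Wset n) = (x \in Wset n).
Proof.
move=> S; apply/idP/idP; last exact: Sb_W.
by move/(Sb_W S); rewrite Sb_inv.
Qed.

Lemma Rb_uniq1 t1 t1' t : Sb t1 -> Sb t1' -> Rb t1 t -> Rb t1' t -> t1 = t1'.
Proof.
move=> S S' R R'.
have EW x : x \in Wset n -> t1 x = t1' x.
  move=> xW; rewrite -(psiinvK xW); apply: (perm_inj (s := tau2 (2 * n))).
  by rewrite R R'.
apply/permP=> x; case xW: (x \in Wset n); first exact: EW.
by rewrite -(tau0K x) (Sb_comm S) (Sb_comm S') EW // tau0W xW.
Qed.

Lemma Rb_uniq2 t1 t t' : Rb t1 t -> Rb t1 t' -> t = t'.
Proof. by move=> R R'; apply/permP=> y; apply: psi_inj; rewrite -R -R'. Qed.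

Lemma W_im : Wset n = psi @: setT.
Proof.
apply/setP=> x; apply/idP/imsetP; last by case=> y _ ->; exact: psiW.
by move=> xW; exists (psiinv x); rewrite ?psiinvK.
Qed.

Lemma B_im : ~: Wset n = (fun y => tau0 (2 * n) (psi y)) @: setT.
Proof.
apply/setP=> x; rewrite inE; apply/idP/imsetP.
  move=> xW; exists (psiinv (tau0 (2 * n) x)) => //.
  by rewrite psiinvK ?tau0K // tau0W.
by case=> y _ ->; rewrite tau0W negbK psiW.
Qed.

Lemma psi1 y : (psi y).1 = ~~ y.1. Proof. by []. Qed.
Lemma tau2_1 m (x : pm m) : (tau2 m x).1 = ~~ x.1.
Proof. by case: x => [[] i]; rewrite tau2E. Qed.

Lemma Rb_equiv k p t1 t : Sb t1 -> Rb t1 t ->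
  (t1 \in b_tilde k p n) = (t \in b_hat k p n).
Proof.
move=> S R; have S0 := S; case/and3P: S0 => c1 c2 c3.
have R' y : t1 (psi y) = tau2 (2 * n) (psi (t y)) by rewrite -R tau2K.
set s := (t1 * tau2 (2 * n))%g.
have sW y : s (psi y) = psi (t y) by rewrite permM R.
have sB y : s (tau0 (2 * n) (psi y)) = tau0 (2 * n) (psi ((t * tcyc n)%g y)).
  by rewrite /s !permM (Sb_comm S) R' key.
have Ei := ncycles_split (W := Wset n) (s := s).
rewrite !inE -/s Ei; last by move=> y yW; rewrite permM tau2W Sb_W.
rewrite {1 3}W_im B_im (ncycles_transport psi_inj sW).
have hinj : injective (fun y => tau0 (2 * n) (psi y)).
  by move=> a b /(congr1 (tau0 (2 * n))); rewrite !tau0K => /psi_inj.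
rewrite (ncycles_transport hinj sB).
have d4 : fpf (t1 * tau0 (2 * n))%g.
  apply/forallP=> x; rewrite permM; apply/negP=> /eqP E.
  by move: (Sb_Wiff x S); rewrite -{2}E tau0W; case: (_ \in _).
have h3 : (tau0 n * t * tau0 n == t^-1)%g.
  apply/eqP/permP=> z; rewrite !permM; apply: (perm_inj (s := t)); rewrite permKV.
  by apply: psi_inj; rewrite -R -tau2psi -R tau2K (Sb_inv S) tau2psi tau0K.
have h4 : fpf (t * tau0 n)%g.
  apply/forallP=> y; rewrite permM; apply/negP=> /eqP E.
  by move: (Sb_fpf S (psi y)); rewrite R' -{2}E -tau2psi eqxx.
have Ex : [exists i : 'I_(2 * n), ~~ (t1 (pos i)).1] = [exists i : 'I_n, (t (pos i)).1].
  have F1 y : (t y).1 = (t1 (psi y)).1 by rewrite R' tau2_1 psi1 negbK.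
  have F2 i : (t (pos i)).1 = ~~ (t1 (pos (ev i))).1.
    rewrite F1; have -> : psi (pos i) = tau0 (2 * n) (pos (ev i)) by rewrite tau0E.
    by rewrite Sb_comm // tau0E.
  apply/existsP/existsP.
    case=> j; case: (odd_split j) => -[-> _] hj.
      by exists (hlf j); rewrite F2.
    have hn : ~~ (t (neg (hlf j))).1 by rewrite F1.
    case: (boolP [exists i, (t (pos i)).1]) => [/existsP //| Hn0].
    have Hn i : ~~ (t (pos i)).1.
      by apply/negP=> h; move/negP: Hn0; apply; apply/existsP; exists i.
    pose f := fun i : 'I_n => (t (pos i)).2.
    have Hp i : t (pos i) = pos (f i).
      by move: (Hn i); rewrite /f /pos; case: (t (pos i)) => [[] ?].
    have fi : injective f.
      move=> a b E; have : pos a = pos b :> pm n by apply: (@perm_inj _ t); rewrite !Hp E.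
      by case.
    have [g fg gf] := injF_bij fi.
    have : t (pos (g (t (neg (hlf j))).2)) = t (neg (hlf j)).
      rewrite Hp gf; move: hn; rewrite /pos; case: (t (neg _)) => [[] ?] //.
    by move/perm_inj.
  by case=> i hi; exists (ev i); move: hi; rewrite F2.
rewrite c1 c2 c3 d4 h3 h4 Ex /=.
case: [exists i, _] => /=; rewrite ?andbF // andbT.
by case: (ncycles t =P 2 * p) => [->|_]; rewrite ?andbF ?andbT //= (addnC (2 * p)).
Qed. 
End PartB.

Lemma partB n k p : exists f : {perm pm (2 * n)} -> {perm pm n},
      {in b_tilde k p n &, injective f} /\ f @: b_tilde k p n = b_hat k p n.
Proof.
exists (@fb n); apply: (@assemble _ _ _ _ (@Sb n) (@Rb n) _ (@gb n)).
- exact: Rb_fb.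
- by move=> y; rewrite inE => /and5P [_ _ h3 h4 _]; exact: gb_spec h3 h4.
- exact: Rb_uniq1.
- exact: Rb_uniq2.
- by move=> x; rewrite inE => /and4P [a _ c /and4P [_ _ f _]]; rewrite /Sb a c f.
- move=> x y; exact: Rb_equiv.
Qed.

Theorem lemma2 (n g k p : nat) :
  (exists f : {perm 'I_(2 * n)} -> {perm 'I_n},
      {in a_tilde g p n &, injective f} /\ f @: a_tilde g p n = a_hat g p n) /\
  (exists f : {perm pm (2 * n)} -> {perm pm n},
      {in b_tilde k p n &, injective f} /\ f @: b_tilde k p n = b_hat k p n).
Proof. split; [exact: partA | exact: partB]. Qed.
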